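(* Let $m\ge2$ and $n\ge m$. For every real $\beta>0$, there is no proportional mechanism $(A,q)$ for the goods allocation problem over the set $\mathcal{C}=\mathbb{R}_{\ge0}^{m\times n}$ of general instances such that $\beta\cdot\min_{i\in[m]}v_i(A(v)_i)\ge\mathrm{OPT}(v)$ for every $v\in\mathcal{C}$.
   Context: Goods allocation: $m$ agents $[m]$, $n$ goods $[n]$; an instance is a matrix $v\in\mathbb{R}_{\ge0}^{m\times n}$, $v_{i,j}$ the value of agent $i$ for good $j$, $v_i(S)=\sum_{j\in S}v_{i,j}$. An allocation is a tuple of pairwise disjoint subsets of $[n]$ with union $[n]$. A mechanism $(A,q)$ over $\mathcal{I}$ assigns to each $v$ an allocation $A(v)$ and transfers $q(v)\in\mathbb{R}^m$ (written $A_i,q_i$); it is proportional if for every $v\in\mathcal{I}$ and $i\in[m]$: $v_i(A_i)-q_i\ge\frac1m\sum_{j\in[m]}(v_i(A_j)-q_j)$. $\mathrm{OPT}(v)=\max_X\min_{i\in[m]}v_i(X_i)$ over all allocations $X$ (optimal egalitarian welfare). *)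

(* Defs.v *)
From HB Require Import structures.
From mathcomp Require Import all_boot all_order all_algebra.
From mathcomp Require Import reals.
Set Implicit Arguments. Unset Strict Implicit. Unset Printing Implicit Defensive.
Import Order.TTheory GRing.Theory Num.Theory.
Local Open Scope ring_scope.

(* An instance is v : 'M[R]_(m, n); v i j is the value of agent i for good j. *)

(* An allocation: each good j is assigned to exactly one agent X j; the bundle
   of agent i is [set j | X j == i].  Such maps are in bijection with tuples
   (X_1,...,X_m) of pairwise disjoint subsets of [n] with union [n]. *)
Definition allocation (m n : nat) := {ffun 'I_n -> 'I_m}.

Definition bundle (m n : nat) (X : allocation m n) (i : 'I_m) : {set 'I_n} :=
  [set j | X j == i].

Definition val_of (R : realType) (m n : nat) (v : 'M[R]_(m, n)) (i : 'I_m)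
  (S : {set 'I_n}) : R := \sum_(j in S) v i j.

Definition minlist (R : realType) (s : seq R) : R :=
  foldr Num.min (head 0 s) s.

(* min_{i in [m]} v_i(X_i)  (meaningful for m >= 1) *)
Definition min_util (R : realType) (m n : nat) (v : 'M[R]_(m, n))
  (X : allocation m n) : R :=
  minlist [seq val_of v i (bundle X i) | i <- enum 'I_m].

Definition OPT (R : realType) (m n : nat) (v : 'M[R]_(m, n)) : R :=
  let s := [seq min_util v X | X <- enum {ffun 'I_n -> 'I_m}] in
  foldr Num.max (head 0 s) s.

Definition nonneg_instance (R : realType) (m n : nat) (v : 'M[R]_(m, n)) : Prop :=
  forall i j, 0 <= v i j.

Definition proportional (R : realType) (m n : nat)
  (C : 'M[R]_(m, n) -> Prop)
  (A : 'M[R]_(m, n) -> allocation m n) (q : 'M[R]_(m, n) -> 'I_m -> R) : Prop :=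
  forall v, C v -> forall i : 'I_m,
    val_of v i (bundle (A v) i) - q v i >=
    m%:R^-1 * \sum_(j < m) (val_of v i (bundle (A v) j) - q v j).

(* Main.v *)
Require Import Defs.
From HB Require Import structures.
From mathcomp Require Import all_boot all_order all_algebra.
From mathcomp Require Import reals.
From mathcomp Require Import lra.
Import Order.TTheory GRing.Theory Num.Theory.
Local Open Scope ring_scope.

Lemma foldr_min_le (R : realType) (s : seq R) x0 x :
  x \in s -> foldr Num.min x0 s <= x.
Proof.
elim: s => [//|a s IH] /=; rewrite inE => /orP [/eqP ->|/IH H].
  by rewrite ge_min lexx.
by rewrite ge_min H orbT.
Qed.

Lemma foldr_min_ge (R : realType) (s : seq R) x0 c :
  c <= x0 -> (forall x, x \in s -> c <= x) -> c <= foldr Num.min x0 s.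
Proof.
move=> H0; elim: s => [//|a s IH] /= H.
rewrite le_min H ?inE ?eqxx //= IH // => x Hx; apply: H; by rewrite inE Hx orbT.
Qed.

Lemma foldr_max_ge (R : realType) (s : seq R) x0 x :
  x \in s -> x <= foldr Num.max x0 s.
Proof.
elim: s => [//|a s IH] /=; rewrite inE => /orP [/eqP ->|/IH H].
  by rewrite le_max lexx.
by rewrite le_max H orbT.
Qed.

Lemma sum_bundles (R : realType) (m n : nat) (X : allocation m n)
  (F : 'I_m -> 'I_n -> R) :
  \sum_(k < m) \sum_(j in bundle X k) F k j = \sum_(j < n) F (X j) j.
Proof.
rewrite [RHS](partition_big X xpredT) //=.
apply: eq_bigr => k _; apply: eq_big => j; first by rewrite inE.
by rewrite inE => /eqP ->.
Qed.

Lemma val_of_ge (R : realType) (m n : nat) (v : 'M[R]_(m, n)) i (S : {set 'I_n}) j :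
  nonneg_instance v -> j \in S -> v i j <= val_of v i S.
Proof.
move=> Hv Hj; rewrite /val_of (bigD1 j) //=.
apply: ler_wpDr; first by apply: sumr_ge0 => k _; apply: Hv.
exact: lexx.
Qed.

Theorem mainTheorem8 (R : realType) (m n : nat) :
  (2 <= m)%N -> (m <= n)%N ->
  forall beta : R, 0 < beta ->
  ~ exists (A : 'M[R]_(m, n) -> allocation m n) (q : 'M[R]_(m, n) -> 'I_m -> R),
      proportional (@nonneg_instance R m n) A q /\
      (forall v : 'M[R]_(m, n), nonneg_instance v ->
         beta * min_util v (A v) >= OPT v).
Proof.
move=> Hm Hmn beta Hb [A [q [Hprop Happ]]].
have H1m : (1 < m)%N by [].
have H1n : (1 < n)%N by apply: leq_trans Hmn.
have H0m : (0 < m)%N by apply: ltnW.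
pose K : R := (m * n).+1%:R.
pose v : 'M[R]_(m, n) := \matrix_(i < m, j < n)
  (if val i == 0%N then (if val j == 1%N then K else 1)
   else (if val j == val i then 1 else 0)).
have Hv : nonneg_instance v.
  move=> i j; rewrite /v mxE.
  by case: ifP => _; case: ifP => _; rewrite ?ler01 ?lexx ?ler0n.
pose i0 : 'I_m := Ordinal H0m.
pose i1 : 'I_m := Ordinal H1m.
pose g1 : 'I_n := Ordinal H1n.
pose X0 : allocation m n := [ffun j : 'I_n =>
  if (insub (val j) : option 'I_m) is Some i then i else i0].
have HX0 : forall i : 'I_m, X0 (widen_ord Hmn i) = i.
  move=> i; rewrite /X0 ffunE /= insubT; first exact: ltn_ord.
  by move=> Hi; apply: val_inj.
have Hgood : forall i : 'I_m, v i (widen_ord Hmn i) = 1.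
  move=> i; rewrite /v mxE /=; case: ifP => [/eqP ->|_] //; by rewrite eqxx.
have HOPT : 1 <= OPT v.
  rewrite /OPT /=.
  have HH := @foldr_max_ge R _ (head 0 [seq min_util v X | X <- enum {ffun 'I_n -> 'I_m}]) _
     (map_f (@min_util R m n v) (mem_enum {ffun 'I_n -> 'I_m} X0)).
  apply: le_trans HH.
  apply: (@foldr_min_ge R).
    case: (enum 'I_m) (mem_enum 'I_m i0) => [//|a s] _ /=.
    by rewrite -(Hgood a); apply: val_of_ge; rewrite // inE HX0.
  move=> x /mapP [i _ ->].
  by rewrite -(Hgood i); apply: val_of_ge; rewrite // inE HX0.
have Hmu : 0 < min_util v (A v).
  rewrite ltNge; apply/negP => H.
  have : beta * min_util v (A v) <= 0 by rewrite pmulr_rle0.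
  have := Happ v Hv; lra.
have HA1 : A v g1 = i1.
  apply/eqP; case: eqP => // Hne; exfalso.
  have Hle : min_util v (A v) <= val_of v i1 (bundle (A v) i1).
    by apply: (@foldr_min_le R); apply: map_f; rewrite mem_enum.
  have : val_of v i1 (bundle (A v) i1) = 0.
    apply: big1 => j; rewrite inE => /eqP Hj.
    rewrite /v mxE /=; case: ifP => [/eqP Hj1|//].
    by exfalso; apply: Hne; rewrite -Hj; have -> : g1 = j by apply: val_inj; rewrite /= Hj1.
  lra.
have HW : \sum_(k < m) val_of v k (bundle (A v) k) <= n%:R.
  rewrite /val_of sum_bundles.
  rewrite -[n in n%:R]card_ord -sumr_const.
  apply: ler_sum => j _; rewrite /v mxE.
  case: ifP => [/eqP H0|_]; last by case: ifP => _; rewrite ?lexx ?ler01.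
  case: ifP => [/eqP Hj1|_]; last exact: lexx.
  have : A v j = i1 by rewrite -HA1; have -> : j = g1 by apply: val_inj; rewrite /= Hj1.
  by move=> HH; move: H0; rewrite HH.
have HT : K <= \sum_(i < m) \sum_(j < n) v i j.
  apply: le_trans (_ : \sum_(j < n) v i0 j <= _).
    have -> : K = v i0 g1 by rewrite /v mxE.
    rewrite (bigD1 g1) //=; apply: ler_wpDr; last exact: lexx.
    by apply: sumr_ge0 => k _; apply: Hv.
  rewrite (bigD1 i0) //=; apply: ler_wpDr; last exact: lexx.
  by apply: sumr_ge0 => k _; apply: sumr_ge0 => j _; apply: Hv.
pose Q := \sum_(j < m) q v j.
have Hrow : forall i, \sum_(j < m) (val_of v i (bundle (A v) j) - q v j)
                       = \sum_(g < n) v i g - Q.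
  move=> i; rewrite sumrB; congr (_ - _).
  by rewrite /val_of (@sum_bundles R m n (A v) (fun _ g => v i g)).
have Hsum : \sum_(i < m) (m%:R^-1 * (\sum_(g < n) v i g - Q))
   <= \sum_(i < m) (val_of v i (bundle (A v) i) - q v i).
  by apply: ler_sum => i _; rewrite -Hrow; exact: Hprop.
rewrite -mulr_sumr !sumrB sumr_const card_ord -[Q *+ _]mulr_natr in Hsum.
have Hmpos : (0 : R) < m%:R by rewrite ltr0n.
have Hinv : m%:R^-1 * m%:R = 1 :> R by rewrite mulVf // gt_eqF.
set W := \sum_(k < m) _ in HW Hsum.
set T := \sum_(i < m) \sum_(j < n) v i j in HT Hsum.
rewrite mulrBr mulrCA Hinv mulr1 -/Q in Hsum.
have HK : m%:R^-1 * K = n%:R + m%:R^-1.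
  rewrite /K -addn1 natrD natrM mulrDr mulrA Hinv mul1r mulr1 //.
have HT' : m%:R^-1 * K <= m%:R^-1 * T.
  by rewrite ler_pM2l // invr_gt0.
have : 0 < m%:R^-1 :> R by rewrite invr_gt0.
lra.
Qed.
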